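(* In the construction below, $\hat{\mathcal D}$ is $1$-expanding with respect to $(X,d)$: for any two directed paths $\gamma_1,\gamma_2$ in $\mathcal D$ from the root to vertices $(x_1,K),(x_2,K)$ respectively, $\mathrm{dist}_{\hat{\mathcal D}}(\gamma_1,\gamma_2)\ge d(x_1,x_2)$.
   Context: Construction. Let $(X,d)$ be a metric space with $n=|X|\ge2$ and $\mathrm{diam}(X)=1$. For $S\subseteq X$, $r\ge0$: $B_X(S,r):=\{x\in X:\exists s\in S,\ d(x,s)\le r\}$ and $B_X(x,r):=B_X(\{x\},r)$. Let $\varepsilon_0:=\min\{d(x,y):x\ne y\}$, $\tau:=12$, $K:=1+\lceil\log_\tau(1/\varepsilon_0)\rceil$. For $\eta>0$ the greedy $\eta$-net is built as: $N_0=\emptyset$; for $j\ge1$, $S_j:=X\setminus B_X(N_{j-1},\eta)$; if $S_j=\emptyset$ output $N_{j-1}$; else pick $x_j\in S_j$ maximizing $|B_X(x,\eta/3)|$ and set $N_j=N_{j-1}\cup\{x_j\}$. For $k=0,\dots,K$ let $U_k$ be the greedy $\tau^{-k}$-net. For $k<K$, $A_k$ is the set of pairs $(u,u')\in U_k\times U_{k+1}$ with (i) $d(u,u')\le4\tau^{-k}$ and (ii) $|B_X(u,\tau^{-k}/3)|\ge\max\{|B_X(w,\tau^{-k}/3)|:w\in B_X(u',6\tau^{-(k+1)})\}$. The directed graph $\mathcal D$ has vertex set $\{(u,k):u\in U_k,\ 0\le k\le K\}$, arcs $((u,k),(u',k+1))$ for $(u,u')\in A_k$, root $(u,0)$ with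 $U_0=\{u\}$, and the vertices $(x,K)$ are identified with $x\in X$. Arc weights: $\omega_{(u,k)(u',k+1)}:=10\tau^{-k}$. For two root-to-level-$K$ paths $\gamma_1\ne\gamma_2$, let $a$ be the first vertex at which they diverge, with arcs $av_1\in\gamma_1$, $av_2\in\gamma_2$, $v_1\ne v_2$; $\mathrm{dist}_{\hat{\mathcal D}}(\gamma_1,\gamma_2):=\max(\omega_{av_1},\omega_{av_2})$, and $\mathrm{dist}_{\hat{\mathcal D}}(\gamma,\gamma):=0$. *)

(* Defs.v *)
From HB Require Import structures.
From mathcomp Require Import all_boot all_order all_algebra.
From mathcomp Require Import reals exp.
Set Implicit Arguments. Unset Strict Implicit. Unset Printing Implicit Defensive.
Import Order.TTheory GRing.Theory Num.Theory.
Local Open Scope ring_scope.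

Section Construction.
Variables (R : realType) (T : finType) (d : T -> T -> R).

Definition is_metric : Prop :=
  [/\ forall x y, d x y = 0 <-> x = y,
      forall x y, d x y = d y x &
      forall x y z, d x z <= d x y + d y z].

Definition diam : R := \big[Order.max/0]_(p : T * T) d p.1 p.2.

(* eps0 = min_{x <> y} d(x,y)  (identity 1 is harmless since diam = 1, n >= 2) *)
Definition eps0 : R := \big[Order.min/1]_(p : T * T | p.1 != p.2) d p.1 p.2.

Definition tau : R := 12%:R.

Definition Kc : nat := (`|Num.ceil (ln (eps0^-1) / ln tau)|%N).+1.

Definition ballS (S : {set T}) (r : R) : {set T} :=
  [set x | [exists s in S, d x s <= r]].
Definition ball1 (x : T) (r : R) : {set T} := ballS [set x] r.

(* xs = [x_1; ...; x_m] is a run of the greedy eta-net procedure: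
   each x_j lies in S_j = X \ B(N_{j-1}, eta) and maximizes |B(., eta/3)| on S_j,
   and S_{m+1} is empty. *)
Definition greedy_run (eta : R) (xs : seq T) : Prop :=
  (forall ys x zs, xs = ys ++ x :: zs ->
     x \notin ballS [set y in ys] eta /\
     (forall y, y \notin ballS [set y in ys] eta ->
        (#|ball1 y (eta / 3%:R)| <= #|ball1 x (eta / 3%:R)|)%N)) /\
  ballS [set y in xs] eta = [set: T].

(* N is an output of the greedy eta-net procedure (for some tie-breaking) *)
Definition greedy_net (eta : R) (N : {set T}) : Prop :=
  exists xs, greedy_run eta xs /\ N = [set y in xs].

Definition arc (U : nat -> {set T}) (k : nat) (u u' : T) : Prop :=
  [/\ u \in U k, u' \in U k.+1,
      d u u' <= 4%:R * tau ^- k &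
      forall w, w \in ball1 u' (6%:R * tau ^- k.+1) ->
        (#|ball1 w (tau ^- k / 3%:R)| <= #|ball1 u (tau ^- k / 3%:R)|)%N].

(* weight of an arc from level k to level k+1 *)
Definition omega (k : nat) : R := 10%:R * tau ^- k.

(* a directed path from the root (level 0) to level K: g i is the vertex
   (g i, i) at level i *)
Definition root_path (U : nat -> {set T}) (K : nat) (g : {ffun 'I_K.+1 -> T}) : Prop :=
  (forall i : 'I_K.+1, g i \in U i) /\
  (forall k, (k < K)%N -> arc U k (g (inord k)) (g (inord k.+1))).

(* dist_{hat D}(g1, g2): if j is the first level where the paths differ,
   the divergence vertex a is at level j-1 and both diverging arcs have
   weight omega (j-1). *)
Definition pdist (K : nat) (g1 g2 : {ffun 'I_K.+1 -> T}) : R :=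
  if g1 == g2 then 0 else
  let j := find (fun i : 'I_K.+1 => g1 i != g2 i) (enum 'I_K.+1) in
  Num.max (omega j.-1) (omega j.-1).

End Construction.

(* Main.v *)
Require Import Defs.
From HB Require Import structures.
From mathcomp Require Import all_boot all_order all_algebra.
From mathcomp Require Import reals exp.
From mathcomp Require Import lra.
Import Order.TTheory GRing.Theory Num.Theory.
Local Open Scope ring_scope.

Lemma tauS (R : realType) n : (tau R) ^- n.+1 = (tau R) ^- n / 12%:R.
Proof. by rewrite exprSr invfM. Qed.

Lemma tau_ge0 (R : realType) n : 0 <= (tau R) ^- n.
Proof. by rewrite invr_ge0 exprn_ge0 // /tau ler0n. Qed.

Lemma chain (R : realType) (T : finType) (d : T -> T -> R) U K
  (g : {ffun 'I_K.+1 -> T}) :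
  is_metric d -> root_path d U g -> forall m n, (m <= n)%N -> (n <= K)%N ->
  d (g (inord m)) (g (inord n)) <= 48%:R/11%:R * ((tau R)^-m - (tau R)^-n).
Proof.
move=> [h0 hs ht] [_ hp] m; elim=> [|n IH] hmn hnK.
  rewrite leqn0 in hmn; rewrite (eqP hmn) subrr mulr0.
  by rewrite (proj2 (h0 _ _)).
move: hmn; rewrite leq_eqVlt => /orP [/eqP ->|hmn].
  by rewrite subrr mulr0 (proj2 (h0 _ _)).
have := IH hmn (ltnW hnK).
have [_ _ ha _] := hp n hnK.
have := ht (g (inord m)) (g (inord n)) (g (inord n.+1)).
rewrite tauS.
have := tau_ge0 R n.
rewrite /tau; lra.
Qed.

Lemma le_bigmax_seq (R : realType) (I : eqType) (F : I -> R) (s : seq I) x :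
  x \in s -> F x <= \big[Order.max/0]_(i <- s) F i.
Proof.
elim: s => // a s IH; rewrite inE big_cons => /orP [/eqP ->|hx].
  by rewrite le_max ?lexx.
by rewrite le_max (IH hx) orbT.
Qed.

Theorem lemma3p7 (R : realType) (T : finType) (d : T -> T -> R)
  (U : nat -> {set T}) :
  is_metric d -> (1 < #|T|)%N -> diam d = 1 ->
  (forall k, (k <= Kc d)%N -> greedy_net d (tau R ^- k) (U k)) ->
  forall g1 g2 : {ffun 'I_(Kc d).+1 -> T},
    root_path d U g1 -> root_path d U g2 ->
    d (g1 ord_max) (g2 ord_max) <= pdist R g1 g2.
Proof.
move=> hm _ hdiam _; move: (Kc d) => K g1 g2 p1 p2.
have [h0 hs ht] := hm.
rewrite /pdist; case: eqP => [->|/eqP hne].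
  by rewrite (proj2 (h0 _ _)).
rewrite maxxx.
have hmax : (ord_max : 'I_K.+1) = inord K by apply: val_inj; rewrite /= inordK.
set j := find _ _.
have hj : (j < K.+1)%N.
  have : has (fun i : 'I_K.+1 => g1 i != g2 i) (enum 'I_K.+1).
    have : ~~ [forall i, g1 i == g2 i].
      by apply: contra hne => /forallP h; apply/eqP/ffunP => i; apply/eqP.
    rewrite negb_forall => /existsP [i hi]; apply/hasP.
    by exists i; rewrite ?mem_enum.
  by rewrite has_find size_enum_ord.
move: hj; case E: j => [|j'] hj /=.
  have hle : d (g1 ord_max) (g2 ord_max) <= 1.
    rewrite -hdiam /diam.
    have := @le_bigmax_seq R _ (fun p : T * T => d p.1 p.2) _ _ (mem_index_enum (g1 ord_max, g2 ord_max)).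
    by [].
  rewrite /omega expr0 invr1 mulr1; apply: (le_trans hle); by rewrite ler1n.
have hjj : (j' < j)%N by rewrite E.
have hb := @before_find _ ord0 _ (enum 'I_K.+1) j' hjj.
clear E hjj; clearbody j; clear j; rename j' into j.
rewrite (nth_ord_enum ord0 (Ordinal (ltnW hj))) in hb.
move/negbFE/eqP: hb => hb.
have hjK : (j <= K)%N by rewrite -ltnS ltnW.
have c1 := @chain _ _ _ _ _ _ hm p1 j K hjK (leqnn K).
have c2 := @chain _ _ _ _ _ _ hm p2 j K hjK (leqnn K).
have e : (Ordinal (ltnW hj)) = inord j :> 'I_K.+1 by apply: val_inj; rewrite /= inordK // ltnW.
rewrite e in hb.
rewrite -hmax in c1 c2.
have t1 := ht (g1 ord_max) (g1 (inord j)) (g2 ord_max).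
have t2 := ht (g1 (inord j)) (g2 (inord j)) (g2 ord_max).
have z : d (g1 (inord j)) (g2 (inord j)) = 0 by apply/h0.
have sy := hs (g1 ord_max) (g1 (inord j)).
have tk := tau_ge0 R K.
have tj := tau_ge0 R j.
rewrite /omega /=.
move: t1 t2 z sy tk tj c1 c2.
generalize (d (g1 ord_max) (g1 (inord j))) (d (g1 (inord j)) (g1 ord_max))
  (d (g1 (inord j)) (g2 (inord j))) (d (g2 (inord j)) (g2 ord_max))
  (d (g1 ord_max) (g2 ord_max)) (d (g1 (inord j)) (g2 ord_max)).
generalize ((tau R) ^- K) ((tau R) ^- j).
rewrite /tau.
move=> a b x1 x2 x3 x4 x5 x6; lra.
Qed.
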